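(* Let $p$ be a probability rule for quantum many-worlds theory satisfying Axioms (A1)–(A3). Let $v=\sum_{n=0}^{N-1}\sqrt{m_n/M}\,\lvert n\rangle$, where $m_0,\dots,m_{N-1}$ and $M$ are positive integers with $\sum_{n=0}^{N-1}m_n=M$, so that $v$ is an allowed state. Then $p_n(v)=m_n/M$ for $0\le n<N$, and $p_n(v)=0$ for $n\ge N$.
   Context: Quantum many-worlds theory is defined as follows. The worlds are the vectors $\lvert n\rangle$, $n\in\{0,1,2,\dots\}$, of a countably infinite orthonormal basis of a complex Hilbert space. The allowed states are the vectors $v=\sum_n v_n\lvert n\rangle$ with $\sum_n|v_n|^2=1$, where $v_n=\langle n\vert v\rangle$ is the amplitude of world $n$. The allowed transformations are all unitary operators $T$, with matrix elements $T_{ij}=\langle i\rvert T\lvert j\rangle$. A probability rule assigns to each allowed state $v$ a sequence $(p_n(v))_{n\ge 0}$ of nonnegative reals with $\sum_n p_n(v)=1$. The axioms are: (A1) Present state dependence: $p_n$ depends only on the present state $v$, so $p$ is a function of the state alone. (A2) Weak connection with amplitudes: for every allowed state $v$, $v_n=0$ implies $p_n(v)=0$. (A3) Weak connection with transformations: for every allowed state $v$ and allowed transformation $T$, and every partition of $\{0,1,2,\dots\}$ into subsets $\mathcal S_k$ such that $T_{ij}=0$ whenever $i$ and $j$ lie in different subsets, we have $\sum_{n\in\mathcal S_k}p_n(v)=\sum_{n\in\mathcal S_k}p_n(Tv)$ for every $k$. *)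

(* Defs.v *)
From Stdlib Require Import Reals List Arith.
From Coquelicot Require Import Coquelicot.
Open Scope R_scope.

(* A vector of the Hilbert space, written in the world basis |n>: v n = <n|v>. *)
Definition vec := nat -> C.

Definition ket (j : nat) : vec := fun i => if Nat.eqb i j then RtoC 1 else RtoC 0.

Definition is_l2 (v : vec) : Prop := ex_series (fun n => (Cmod (v n))^2).

Definition normsq (v : vec) : R := Series (fun n => (Cmod (v n))^2).

Definition is_state (v : vec) : Prop := is_series (fun n => (Cmod (v n))^2) 1.

(* Allowed transformations: unitary operators on l^2, i.e. linear maps
   l^2 -> l^2 which preserve the norm and are surjective onto l^2.
   (Values of T outside l^2 are irrelevant.) *)
Definition unitary (T : vec -> vec) : Prop :=
  (forall v, is_l2 v -> is_l2 (T v)) /\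
  (forall u w (a b : C), is_l2 u -> is_l2 w ->
     forall n, T (fun i => Cplus (Cmult a (u i)) (Cmult b (w i))) n
               = Cplus (Cmult a (T u n)) (Cmult b (T w n))) /\
  (forall v, is_l2 v -> normsq (T v) = normsq v) /\
  (forall w, is_l2 w -> exists v, is_l2 v /\ forall n, T v n = w n).

Definition mat_el (T : vec -> vec) (i j : nat) : C := T (ket j) i.

(* A probability rule: to each allowed state a sequence of nonnegative reals
   summing to 1.  (A1) is built in: p is a function of the present state. *)
Definition prob_rule (p : vec -> nat -> R) : Prop :=
  forall v, is_state v -> (forall n, 0 <= p v n) /\ is_series (p v) 1.

Definition axiom_A2 (p : vec -> nat -> R) : Prop :=
  forall v, is_state v -> forall n, v n = RtoC 0 -> p v n = 0.

(* (A3): a partition of N into subsets S_k is given by a block-labelling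
   kappa : nat -> nat, with S_k = kappa^{-1}(k). *)
Definition axiom_A3 (p : vec -> nat -> R) : Prop :=
  forall (v : vec) (T : vec -> vec) (kappa : nat -> nat),
    is_state v -> unitary T ->
    (forall i j, kappa i <> kappa j -> mat_el T i j = RtoC 0) ->
    forall k,
      Series (fun n => if Nat.eqb (kappa n) k then p v n else 0)
      = Series (fun n => if Nat.eqb (kappa n) k then p (T v) n else 0).

Definition sqrt_state (N : nat) (m : nat -> nat) (M : nat) : vec :=
  fun n => if Nat.ltb n N then RtoC (sqrt (INR (m n) / INR M)) else RtoC 0.

(* Main.v *)
Require Import Defs.
From Stdlib Require Import Reals List Arith Lia Lra FunctionalExtensionality.
From Coquelicot Require Import Coquelicot.
Open Scope R_scope.

Fixpoint fsum (f : nat -> R) (B : nat) : R :=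
  match B with O => 0 | S B' => fsum f B' + f B' end.

Lemma sum_n_fsum f N : sum_n f N = fsum f (S N).
Proof.
  rewrite sum_n_Reals. induction N; simpl in *. lra. rewrite IHN. simpl. lra.
Qed.

Lemma fsum_stable f B : (forall n, (B <= n)%nat -> f n = 0) ->
  forall k, fsum f (B + k) = fsum f B.
Proof.
  intros H k; induction k. now rewrite Nat.add_0_r.
  rewrite Nat.add_succ_r; simpl. rewrite IHk, H by lia. lra.
Qed.

Lemma is_series_fin f B : (forall n, (B <= n)%nat -> f n = 0) ->
  is_series f (fsum f B).
Proof.
  intros H. apply filterlim_ext_loc with (f := fun _ => fsum f B).
  - exists B. intros n Hn. rewrite sum_n_fsum.
    replace (S n) with (B + (S n - B))%nat by lia. now rewrite fsum_stable.
  - apply filterlim_const.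
Qed.

Lemma fsum_ext f g B : (forall n, (n < B)%nat -> f n = g n) -> fsum f B = fsum g B.
Proof. induction B; simpl; intros H; auto. rewrite IHB, H; auto. Qed.

Definition ind (i : nat) (a : R) : nat -> R := fun n => if Nat.eqb n i then a else 0.

Lemma is_series_ind i a : is_series (ind i a) a.
Proof.
  assert (H: fsum (ind i a) (S i) = a).
  { simpl. unfold ind at 2. rewrite Nat.eqb_refl.
    rewrite (fsum_ext _ (fun _ => 0)). 2:{ intros n Hn; unfold ind.
      destruct (Nat.eqb_spec n i); [lia|auto]. }
    clear. induction i; simpl; lra. }
  rewrite <- H at 2. apply is_series_fin. intros n Hn; unfold ind.
  destruct (Nat.eqb_spec n i); [lia|auto].
Qed.

Lemma is_series_ext' (f g : nat -> R) (l : R) : (forall n, f n = g n) -> is_series f l -> is_series g l.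
Proof. intros H. apply is_series_ext. auto. Qed.

Lemma series_two (f g : nat -> R) l i j : i <> j ->
  (forall n, n <> i -> n <> j -> g n = f n) -> is_series f l ->
  is_series g (l + (g i - f i) + (g j - f j)).
Proof.
  intros Hij H Hf.
  pose proof (is_series_plus _ _ _ _ (is_series_plus _ _ _ _ Hf (is_series_ind i (g i - f i)))
     (is_series_ind j (g j - f j))) as K.
  apply (is_series_ext' _ g) in K. exact K.
  intro n; unfold ind; change plus with Rplus; simpl.
  destruct (Nat.eqb_spec n i), (Nat.eqb_spec n j); subst; try lia.
  - lra. - lra. - rewrite H; auto. lra.
Qed.

Lemma Cmod2 (z : C) : Cmod z ^ 2 = fst z ^ 2 + snd z ^ 2.
Proof. unfold Cmod. rewrite pow2_sqrt; auto. nra. Qed.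

Definition refl (i j : nat) (c s : R) (v : vec) : vec := fun n =>
  if Nat.eqb n i then Cplus (Cmult (RtoC c) (v i)) (Cmult (RtoC s) (v j))
  else if Nat.eqb n j then Cminus (Cmult (RtoC s) (v i)) (Cmult (RtoC c) (v j))
  else v n.

Lemma refl_mod c s (a b : C) : c^2 + s^2 = 1 ->
  Cmod (Cplus (Cmult (RtoC c) a) (Cmult (RtoC s) b)) ^ 2
  + Cmod (Cminus (Cmult (RtoC s) a) (Cmult (RtoC c) b)) ^ 2
  = Cmod a ^ 2 + Cmod b ^ 2.
Proof.
  intros H. rewrite !Cmod2. destruct a as [a1 a2], b as [b1 b2].
  unfold Cminus, Cplus, Cmult, Copp, RtoC; simpl.
  transitivity ((c^2+s^2) * (a1^2+a2^2+b1^2+b2^2)). ring. rewrite H. ring.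
Qed.

Lemma refl_i i j c s v : refl i j c s v i = Cplus (Cmult (RtoC c) (v i)) (Cmult (RtoC s) (v j)).
Proof. unfold refl. now rewrite Nat.eqb_refl. Qed.
Lemma refl_j i j c s v : i <> j -> refl i j c s v j = Cminus (Cmult (RtoC s) (v i)) (Cmult (RtoC c) (v j)).
Proof. intros H. unfold refl. rewrite Nat.eqb_refl. destruct (Nat.eqb_spec j i); [lia|auto]. Qed.
Lemma refl_o i j c s v n : n <> i -> n <> j -> refl i j c s v n = v n.
Proof. intros H1 H2. unfold refl. destruct (Nat.eqb_spec n i), (Nat.eqb_spec n j); auto; lia. Qed.

Lemma refl_series i j c s v l : i <> j -> c^2+s^2 = 1 ->
  is_series (fun n => Cmod (v n) ^ 2) l ->
  is_series (fun n => Cmod (refl i j c s v n) ^ 2) l.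
Proof.
  intros Hij Hcs H.
  pose proof (series_two (fun n => Cmod (v n) ^ 2) (fun n => Cmod (refl i j c s v n) ^ 2) l i j Hij) as K.
  cbv beta in K. rewrite refl_i, refl_j in K by auto.
  replace (l + (Cmod (Cplus (Cmult (RtoC c) (v i)) (Cmult (RtoC s) (v j))) ^ 2 - Cmod (v i) ^ 2) +
     (Cmod (Cminus (Cmult (RtoC s) (v i)) (Cmult (RtoC c) (v j))) ^ 2 - Cmod (v j) ^ 2)) with l in K.
  apply K; auto. intros n H1 H2. now rewrite refl_o.
  pose proof (refl_mod c s (v i) (v j) Hcs). lra.
Qed.

Lemma refl_invol i j c s v : i <> j -> c^2+s^2 = 1 -> forall n, refl i j c s (refl i j c s v) n = v n.
Proof.
  intros Hij Hcs n. unfold refl at 1. rewrite refl_i, refl_j by auto.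
  destruct (Nat.eqb_spec n i), (Nat.eqb_spec n j); subst; try lia.
  - apply injective_projections; unfold Cminus, Cplus, Cmult, Copp, RtoC; simpl;
    match goal with |- ?L = ?R => transitivity ((c^2+s^2)*R); [ring | rewrite Hcs; ring] end.
  - apply injective_projections; unfold Cminus, Cplus, Cmult, Copp, RtoC; simpl;
    match goal with |- ?L = ?R => transitivity ((c^2+s^2)*R); [ring | rewrite Hcs; ring] end.
  - unfold refl. destruct (Nat.eqb_spec n i), (Nat.eqb_spec n j); try lia; auto.
Qed.

Lemma refl_unitary i j c s : i <> j -> c^2+s^2 = 1 -> unitary (refl i j c s).
Proof.
  intros Hij Hcs. split; [|split; [|split]].
  - intros v [l Hl]. exists l. now apply refl_series.
  - intros u w a b _ _ n. unfold refl.
    destruct (Nat.eqb n i), (Nat.eqb n j); ring.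
  - intros v [l Hl]. unfold normsq. rewrite (is_series_unique _ _ Hl).
    apply is_series_unique. now apply refl_series.
  - intros w Hw. exists (refl i j c s w). split.
    + destruct Hw as [l Hl]. exists l. now apply refl_series.
    + now apply refl_invol.
Qed.

Definition kap (i j : nat) : nat -> nat := fun n => if Nat.eqb n j then i else n.

Lemma refl_blocks i j c s : i <> j ->
  forall x y, kap i j x <> kap i j y -> mat_el (refl i j c s) x y = RtoC 0.
Proof.
  intros Hij x y H. unfold mat_el, kap, refl, ket in *.
  destruct (Nat.eqb_spec x j), (Nat.eqb_spec y j), (Nat.eqb_spec x i), (Nat.eqb_spec y i);
    subst; try lia;
  repeat match goal with |- context [Nat.eqb ?a ?b] => destruct (Nat.eqb_spec a b); try lia end;
  ring.
Qed.

Lemma Series_two_pts (w : nat -> R) i j : i <> j ->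
  Series (fun n => if Nat.eqb (kap i j n) i then w n else 0) = w i + w j.
Proof.
  intros Hij. apply is_series_unique.
  pose proof (is_series_plus _ _ _ _ (is_series_ind i (w i)) (is_series_ind j (w j))) as K.
  apply (is_series_ext' _ (fun n => if Nat.eqb (kap i j n) i then w n else 0)) in K. exact K.
  intro n; unfold ind, kap; change plus with Rplus.
  destruct (Nat.eqb_spec n i), (Nat.eqb_spec n j); subst; try lia; rewrite ?Nat.eqb_refl.
  - lra. - lra. - destruct (Nat.eqb_spec n i); lia || lra.
Qed.

Lemma Series_one_pt (w : nat -> R) i j k : k <> i -> k <> j ->
  Series (fun n => if Nat.eqb (kap i j n) k then w n else 0) = w k.
Proof.
  intros H1 H2. apply is_series_unique.
  apply (is_series_ext' (ind k (w k))). 2: apply is_series_ind.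
  intro n; unfold ind, kap.
  destruct (Nat.eqb_spec n j); subst.
  - destruct (Nat.eqb_spec j k), (Nat.eqb_spec i k); lia || lra.
  - destruct (Nat.eqb_spec n k); subst; auto.
Qed.

Lemma pair_rel p v i j c s : axiom_A3 p -> is_state v -> i <> j -> c^2+s^2 = 1 ->
  p v i + p v j = p (refl i j c s v) i + p (refl i j c s v) j /\
  forall k, k <> i -> k <> j -> p v k = p (refl i j c s v) k.
Proof.
  intros A3 Hv Hij Hcs.
  pose proof (A3 v (refl i j c s) (kap i j) Hv (refl_unitary i j c s Hij Hcs) (refl_blocks i j c s Hij)) as K.
  split.
  - specialize (K i). now rewrite !Series_two_pts in K.
  - intros k H1 H2. specialize (K k). now rewrite !(Series_one_pt _ i j k) in K.
Qed.

Lemma refl_state v i j c s : is_state v -> i <> j -> c^2+s^2 = 1 -> is_state (refl i j c s v).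
Proof. intros. now apply refl_series. Qed.

Lemma swap_val i j v : i <> j -> refl i j 0 1 v = fun x => if Nat.eqb x i then v j else if Nat.eqb x j then v i else v x.
Proof.
  intros H. apply functional_extensionality; intro x. unfold refl.
  destruct (Nat.eqb x i), (Nat.eqb x j); ring.
Qed.

Lemma c01 : 0^2 + 1^2 = 1. Proof. lra. Qed.

Lemma eq_lemma p v n m K : axiom_A2 p -> axiom_A3 p -> is_state v ->
  n <> m -> n <> K -> m <> K -> v n = v m -> v K = RtoC 0 -> p v n = p v m.
Proof.
  intros A2 A3 Hv H1 H2 H3 E Z.
  pose proof (refl_state v n K 0 1 Hv H2 c01) as Sn.
  pose proof (refl_state v m K 0 1 Hv H3 c01) as Sm.
  destruct (pair_rel p v n K 0 1 A3 Hv H2 c01) as [En _].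
  destruct (pair_rel p v m K 0 1 A3 Hv H3 c01) as [Em _].
  rewrite (A2 v Hv K Z) in En, Em.
  assert (Zn : p (refl n K 0 1 v) n = 0).
  { apply A2; auto. rewrite swap_val by auto. now rewrite Nat.eqb_refl. }
  assert (Zm : p (refl m K 0 1 v) m = 0).
  { apply A2; auto. rewrite swap_val by auto. now rewrite Nat.eqb_refl. }
  assert (W : refl n m 0 1 (refl n K 0 1 v) = refl m K 0 1 v).
  { rewrite !swap_val by auto. apply functional_extensionality; intro x.
    repeat rewrite ?Nat.eqb_refl;
    repeat match goal with |- context [Nat.eqb ?a ?b] => destruct (Nat.eqb_spec a b); subst; try lia end;
    auto. }
  destruct (pair_rel p _ n m 0 1 A3 Sn H1 c01) as [_ Ek].
  specialize (Ek K (not_eq_sym H2) (not_eq_sym H3)). rewrite W in Ek. lra.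
Qed.

Fixpoint nsum (f : nat -> nat) (B : nat) : nat :=
  match B with O => O | S B' => (nsum f B' + f B')%nat end.

Lemma nsum_ext f g B : (forall n, (n < B)%nat -> f n = g n) -> nsum f B = nsum g B.
Proof. induction B; simpl; intros H; auto. rewrite IHB, H; auto. Qed.

Lemma nsum_upd f a y B :
  (nsum (fun x => if Nat.eqb x a then y else f x) B + (if Nat.ltb a B then f a else 0)
  = nsum f B + (if Nat.ltb a B then y else 0))%nat.
Proof.
  induction B; simpl; auto.
  destruct (Nat.ltb_spec a B), (Nat.ltb_spec a (S B)), (Nat.eqb_spec B a); subst; try lia.
Qed.

Lemma nsum_zero f B : nsum f B = 0%nat -> forall n, (n < B)%nat -> f n = 0%nat.
Proof.
  induction B; simpl; intros H n Hn. lia.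
  destruct (Nat.eq_dec n B); subst. lia. apply IHB; lia.
Qed.

Lemma nsum_pos f B : (0 < nsum f B)%nat -> exists n, (n < B)%nat /\ (0 < f n)%nat.
Proof.
  induction B; simpl; intros H. lia.
  destruct (f B) eqn:E. destruct IHB as [n [H1 H2]]. lia. exists n; split; auto.
  exists B; split; lia.
Qed.

Lemma fsum_INR k M B : INR M <> 0 -> fsum (fun n => INR (k n) / INR M) B = INR (nsum k B) / INR M.
Proof. intros HM. induction B; simpl. unfold Rdiv; ring. rewrite IHB, plus_INR. field; auto. Qed.

Lemma fsum_scal k c B : fsum (fun n => INR (k n) * c) B = INR (nsum k B) * c.
Proof. induction B; simpl. ring. rewrite IHB, plus_INR. ring. Qed.

Definition kstate (M : nat) (k : nat -> nat) : vec := fun n => RtoC (sqrt (INR (k n) / INR M)).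

Lemma kstate_zero M k n : k n = 0%nat -> kstate M k n = RtoC 0.
Proof. intros H. unfold kstate. rewrite H. simpl. unfold Rdiv. now rewrite Rmult_0_l, sqrt_0. Qed.

Lemma kstate_state M k B : (0 < M)%nat -> (forall n, (B <= n)%nat -> k n = 0%nat) ->
  nsum k B = M -> is_state (kstate M k).
Proof.
  intros HM Hs Hsum. assert (HM' : INR M <> 0) by (apply not_0_INR; lia).
  unfold is_state.
  apply (is_series_ext' (fun n => INR (k n) / INR M)).
  - intros n. unfold kstate. rewrite Cmod2. simpl. rewrite Rmult_0_l, Rplus_0_r, Rmult_1_r.
    rewrite sqrt_sqrt; auto. apply Rmult_le_pos. apply pos_INR.
    apply Rlt_le, Rinv_0_lt_compat, lt_0_INR; lia.
  - replace 1 with (fsum (fun n => INR (k n) / INR M) B).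
    apply is_series_fin. intros n Hn. rewrite Hs by auto. simpl. unfold Rdiv; ring.
    rewrite fsum_INR, Hsum by auto. field; auto.
Qed.

Lemma sqrt_split x y z : 0 <= x -> 0 < y -> 0 < z -> sqrt (x / y) * sqrt (y / z) = sqrt (x / z).
Proof.
  intros. rewrite <- sqrt_mult. f_equal. field. split; lra.
  apply Rmult_le_pos; auto. apply Rlt_le, Rinv_0_lt_compat; auto.
  apply Rmult_le_pos; try lra. apply Rlt_le, Rinv_0_lt_compat; auto.
Qed.

Lemma base_case p M k B : prob_rule p -> axiom_A2 p -> axiom_A3 p -> (0 < M)%nat ->
  (forall n, (B <= n)%nat -> k n = 0%nat) -> nsum k B = M ->
  (forall n, (n < B)%nat -> (k n <= 1)%nat) ->
  forall n, p (kstate M k) n = INR (k n) / INR M.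
Proof.
  intros PR A2 A3 HM Hs Hsum Hle n.
  assert (HM' : INR M <> 0) by (apply not_0_INR; lia).
  set (v := kstate M k).
  assert (Hv : is_state v) by (eapply kstate_state; eauto).
  assert (Z : forall x, k x = 0%nat -> p v x = 0).
  { intros x Hx. apply A2; auto. now apply kstate_zero. }
  destruct (Nat.eq_dec (k n) 0) as [E|E].
  { rewrite Z, E by auto. simpl. unfold Rdiv; ring. }
  assert (Hn : (n < B)%nat). { destruct (Nat.lt_ge_cases n B); auto. rewrite Hs in E; lia. }
  assert (E1 : k n = 1%nat) by (specialize (Hle n Hn); lia).
  set (c := p v n).
  assert (All : forall x, (x < B)%nat -> p v x = INR (k x) * c).
  { intros x Hx. destruct (Nat.eq_dec (k x) 0) as [F|F].
    - rewrite Z, F by auto. simpl. ring.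
    - assert (F1 : k x = 1%nat) by (specialize (Hle x Hx); lia). rewrite F1. simpl. rewrite Rmult_1_l.
      destruct (Nat.eq_dec x n). subst; auto.
      apply (eq_lemma p v x n B); auto; try lia.
      unfold v, kstate. now rewrite F1, E1.
      apply kstate_zero; apply Hs; lia. }
  destruct (PR v Hv) as [_ Hser].
  assert (Hf : is_series (p v) (fsum (p v) B)).
  { apply is_series_fin. intros x Hx. apply Z. apply Hs; auto. }
  assert (Eq1 : fsum (p v) B = 1).
  { rewrite <- (is_series_unique _ _ Hf). apply is_series_unique; auto. }
  rewrite (fsum_ext _ (fun x => INR (k x) * c)) in Eq1 by auto.
  rewrite fsum_scal, Hsum in Eq1.
  rewrite E1. simpl. fold c. field_simplify; auto. apply (Rmult_eq_reg_l (INR M)); auto.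
  rewrite Eq1. field; auto.
Qed.

Lemma main_claim p M : prob_rule p -> axiom_A2 p -> axiom_A3 p -> (0 < M)%nat ->
  forall D k B, nsum (fun n => k n - 1)%nat B = D ->
  (forall n, (B <= n)%nat -> k n = 0%nat) -> nsum k B = M ->
  forall n, p (kstate M k) n = INR (k n) / INR M.
Proof.
  intros PR A2 A3 HM. assert (HM' : 0 < INR M) by (apply lt_0_INR; lia).
  induction D as [|D IH]; intros k B HD Hs Hsum.
  { apply (base_case p M k B); auto. intros n Hn. pose proof (nsum_zero _ _ HD n Hn) as Q. cbv beta in Q. lia. }
  destruct (nsum_pos (fun n => k n - 1)%nat B) as [n0 [Hn0 Hk0]]. lia.
  simpl in Hk0.
  set (k' := fun x => if Nat.eqb x n0 then (k n0 - 1)%nat else if Nat.eqb x B then 1%nat else k x).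
  assert (Hs' : forall x, (S B <= x)%nat -> k' x = 0%nat).
  { intros x Hx. unfold k'. destruct (Nat.eqb_spec x n0), (Nat.eqb_spec x B); try lia. apply Hs; lia. }
  assert (Hsum' : nsum k' (S B) = M).
  { simpl. unfold k' at 2. rewrite Nat.eqb_refl. destruct (Nat.eqb_spec B n0); try lia.
    rewrite (nsum_ext _ (fun x => if Nat.eqb x n0 then (k n0 - 1)%nat else k x)).
    2:{ intros x Hx; unfold k'. destruct (Nat.eqb_spec x B); try lia; auto. }
    pose proof (nsum_upd k n0 (k n0 - 1) B) as U.
    destruct (Nat.ltb_spec n0 B); try lia. }
  assert (HD' : nsum (fun n => k' n - 1)%nat (S B) = D).
  { simpl. unfold k' at 2. rewrite Nat.eqb_refl. destruct (Nat.eqb_spec B n0); try lia.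
    rewrite (nsum_ext _ (fun x => if Nat.eqb x n0 then (k n0 - 1 - 1)%nat else (k x - 1)%nat)).
    2:{ intros x Hx; unfold k'. destruct (Nat.eqb_spec x B); try lia.
        destruct (Nat.eqb x n0); auto. }
    pose proof (nsum_upd (fun x => k x - 1)%nat n0 (k n0 - 1 - 1) B) as U.
    destruct (Nat.ltb_spec n0 B); try lia. }
  specialize (IH k' (S B) HD' Hs' Hsum').
  set (K := INR (k n0)).
  assert (HK : 2 <= K). { unfold K. replace 2 with (INR 2) by (simpl; lra). apply le_INR; lia. }
  assert (HK1 : INR (k n0 - 1) = K - 1). { rewrite minus_INR by lia. reflexivity. }
  set (c := sqrt ((K - 1) / K)). set (s := sqrt (1 / K)).
  assert (Hcs : c^2 + s^2 = 1).
  { unfold c, s. rewrite !pow2_sqrt. field. lra.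
    apply Rmult_le_pos; try lra. apply Rlt_le, Rinv_0_lt_compat; lra.
    apply Rmult_le_pos; try lra. apply Rlt_le, Rinv_0_lt_compat; lra. }
  assert (HB0 : k B = 0%nat) by (apply Hs; lia).
  assert (Hnb : n0 <> B) by lia.
  assert (W : refl n0 B c s (kstate M k) = kstate M k').
  { apply functional_extensionality; intro x.
    destruct (Nat.eqb_spec x n0); [|destruct (Nat.eqb_spec x B)]; try subst x.
    - rewrite refl_i, (kstate_zero M k B HB0). unfold kstate at 1 2. unfold k'. rewrite Nat.eqb_refl.
      rewrite HK1. fold K. rewrite <- (sqrt_split (K-1) K (INR M)) by lra.
      rewrite RtoC_mult. unfold c. ring.
    - rewrite refl_j, (kstate_zero M k B HB0) by auto. unfold kstate at 1 2. unfold k'.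
      rewrite Nat.eqb_refl. destruct (Nat.eqb_spec B n0); try lia. fold K. simpl INR.
      rewrite <- (sqrt_split 1 K (INR M)) by lra.
      rewrite RtoC_mult. unfold s. ring.
    - rewrite refl_o by auto. unfold kstate, k'.
      destruct (Nat.eqb_spec x n0), (Nat.eqb_spec x B); try lia. auto. }
  assert (Hv : is_state (kstate M k)) by (eapply kstate_state; eauto).
  destruct (pair_rel p (kstate M k) n0 B c s A3 Hv Hnb Hcs) as [E1 E2].
  rewrite W in E1, E2.
  assert (PB : p (kstate M k) B = 0) by (apply A2; auto; now apply kstate_zero).
  intros x.
  destruct (Nat.eqb_spec x n0); [|destruct (Nat.eqb_spec x B)]; try subst x.
  - rewrite IH, IH in E1. unfold k' in E1. rewrite !Nat.eqb_refl in E1.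
    destruct (Nat.eqb_spec B n0); try lia. rewrite HK1 in E1. fold K. simpl INR in E1.
    assert (p (kstate M k) n0 = (K - 1) / INR M + 1 / INR M) by lra. rewrite H. field. lra.
  - rewrite PB, HB0. simpl. unfold Rdiv; ring.
  - rewrite E2 by auto. rewrite IH. unfold k'.
    destruct (Nat.eqb_spec x n0), (Nat.eqb_spec x B); try lia. auto.
Qed.

Theorem theorem1 (p : vec -> nat -> R) (N : nat) (m : nat -> nat) (M : nat) :
  prob_rule p -> axiom_A2 p -> axiom_A3 p ->
  (forall n, (n < N)%nat -> (0 < m n)%nat) -> (0 < M)%nat ->
  list_sum (map m (seq 0 N)) = M ->
  (forall n, (n < N)%nat -> p (sqrt_state N m M) n = INR (m n) / INR M) /\
  (forall n, (N <= n)%nat -> p (sqrt_state N m M) n = 0).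
Proof.
  intros PR A2 A3 _ HM Hsum.
  set (k := fun n => if Nat.ltb n N then m n else 0%nat).
  assert (E : sqrt_state N m M = kstate M k).
  { apply functional_extensionality; intro x. unfold sqrt_state, kstate, k.
    destruct (Nat.ltb x N); auto. simpl. unfold Rdiv. now rewrite Rmult_0_l, sqrt_0. }
  assert (Hs : forall n, (N <= n)%nat -> k n = 0%nat).
  { intros n Hn. unfold k. destruct (Nat.ltb_spec n N); lia. }
  assert (Hk : nsum k N = M).
  { rewrite <- Hsum. rewrite (nsum_ext _ m). 2:{ intros n Hn; unfold k; destruct (Nat.ltb_spec n N); lia. }
    clear. induction N; auto. cbn [nsum]. rewrite seq_S, map_app, list_sum_app, IHN. simpl. lia. }
  pose proof (main_claim p M PR A2 A3 HM _ k N eq_refl Hs Hk) as G.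
  rewrite E. split; intros n Hn; rewrite G; unfold k; destruct (Nat.ltb_spec n N); try lia; auto.
  simpl. unfold Rdiv; ring.
Qed.
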